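(* Let $k>1$ be an odd square-free integer and let $K_k=\mathbb{Q}\Big(\sqrt{-k(2+\sqrt2)}\Big)$. Then \[ \tfrac{1}{2359296}\, D_{K_k} \le M(\mathcal{O}_{K_k}) \le \tfrac14\, D_{K_k}. \]
   Context: For a nonconstant polynomial $f(x)=c\prod_{i=1}^d (x-\alpha_i)\in\mathbb{C}[x]$, the Mahler measure is $M(f)=|c|\prod_{|\alpha_i|\ge 1}|\alpha_i|$. For an algebraic number $\alpha$, $M(\alpha)$ is the Mahler measure of its minimal polynomial over $\mathbb{Z}$ (with content $1$). For a number field $K$ with ring of integers $\mathcal{O}_K$ and absolute discriminant $D_K$, $M(\mathcal{O}_K)=\min\{M(\alpha):\alpha\in\mathcal{O}_K,\ \mathbb{Q}(\alpha)=K\}$. *)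

(* Defs.v *)
From HB Require Import structures.
From mathcomp Require Import all_boot all_order all_algebra all_field.
Set Implicit Arguments. Unset Strict Implicit. Unset Printing Implicit Defensive.
Import Order.TTheory GRing.Theory Num.Theory.
Local Open Scope ring_scope.

(* A number field K = Q(theta) is represented by a generator theta : algC.    *)

Definition squarefree (k : nat) : Prop :=
  forall p : nat, prime p -> ~~ (p * p %| k)%N.

Definition in_QQ (theta x : algC) : Prop :=
  exists p : {poly rat}, x = (map_poly ratr p).[theta].

Definition in_OK (theta x : algC) : Prop := in_QQ theta x /\ x \in Aint.

Definition generates (theta x : algC) : Prop :=
  in_QQ theta x /\ in_QQ x theta.

Definition mahler_poly (p : {poly algC}) (m : algC) : Prop :=
  p != 0 /\
  exists s : seq algC,
    p = lead_coef p *: \prod_(a <- s) ('X - a%:P) /\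
    m = `|lead_coef p| * \prod_(a <- s | 1 <= `|a|) `|a|.

(* P is the minimal polynomial of x over Z with content 1
   (positive leading coefficient), i.e. the primitive integer polynomial
   associate to the minimal polynomial of x over Q. *)
Definition int_minpoly (x : algC) (P : {poly int}) : Prop :=
  zcontents P = 1 /\ map_poly intr P %= minCpoly x.

Definition mahler (x m : algC) : Prop :=
  exists P : {poly int}, int_minpoly x P /\ mahler_poly (map_poly intr P) m.

Definition mahler_OK (theta m : algC) : Prop :=
  (exists x, in_OK theta x /\ generates theta x /\ mahler x m) /\
  (forall x m', in_OK theta x -> generates theta x -> mahler x m' -> m <= m').

(* The n embeddings of K into C
   send p(theta) to p(r_j), where r_0..r_{n-1} are the roots of the minimal
   polynomial of theta; b_i = (Pb i)(theta) is an integral basis, i.e. a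
   Z-basis of O_K; D_K = |det(sigma_j(b_i))^2|. *)
Definition abs_disc (theta D : algC) : Prop :=
  exists (n : nat) (r : 'I_n -> algC) (Pb : 'I_n -> {poly rat}),
    minCpoly theta = \prod_(j < n) ('X - (r j)%:P) /\
    (forall i, (map_poly ratr (Pb i)).[theta] \in Aint) /\
    (forall x, in_OK theta x ->
       exists c : 'I_n -> int,
         x = \sum_(i < n) (c i)%:~R * (map_poly ratr (Pb i)).[theta]) /\
    (forall c : 'I_n -> int,
       \sum_(i < n) (c i)%:~R * (map_poly ratr (Pb i)).[theta] = 0 ->
       forall i, c i = 0) /\
    D = `| (\det (\matrix_(i < n, j < n) (map_poly ratr (Pb i)).[r j])) ^+ 2 |.

(* Main.v *)
Require Import Defs.
From HB Require Import structures.
From mathcomp Require Import all_boot all_order all_algebra all_field.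
From mathcomp Require Import ring lra zify.
Set Implicit Arguments. Unset Strict Implicit. Unset Printing Implicit Defensive.
Import Order.TTheory GRing.Theory Num.Theory.
Local Open Scope ring_scope.

Definition s2 : algC := sqrtC 2.
Definition th (k : nat) : algC := sqrtC (- (k%:R) * (2 + s2)).
Definition ph (k : nat) : algC := sqrtC (- (k%:R) * (2 - s2)).

Lemma s2_sq : s2 ^+ 2 = 2.
Proof. by rewrite /s2 sqrtCK. Qed.
Lemma s2_ge0 : 0 <= s2.
Proof. by rewrite /s2 sqrtC_ge0 ler0n. Qed.
Lemma s2_real : s2 \is Num.real.
Proof. by rewrite /s2 sqrtC_real // ler0n. Qed.
Lemma s2_conj : s2^* = s2.
Proof. exact/CrealP/s2_real. Qed.
Lemma s2_neq0 : s2 != 0.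
Proof. by apply/eqP=> h; have := s2_sq; rewrite h expr0n /= => /eqP; rewrite eq_sym pnatr_eq0. Qed.
Lemma s2_gt0 : 0 < s2.
Proof. by rewrite lt_def s2_neq0 s2_ge0. Qed.
Lemma s2_lt : s2 * 3%:R < 5%:R.
Proof.
have h : (s2 * 3%:R) ^+ 2 < 5%:R ^+ 2.
  by rewrite exprMn s2_sq -!natrX -natrM ltr_nat.
rewrite -(ltr_pXn2r (n:=2)) //; rewrite ?nnegrE ?ler0n //.
by rewrite mulr_ge0 ?s2_ge0 ?ler0n.
Qed.
Lemma s2_Aint : s2 \in Aint.
Proof.
apply: (@root_monic_Aint ('X^2 - 2%:P)).
- by rewrite /root !hornerE s2_sq subrr.
- by rewrite monicXnsubC.
- apply/polyOverP => i; rewrite coefB coefXn coefC.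
  by case: (i == 2)%N; case: (i == 0)%N; rewrite /= ?subr0 ?sub0r ?rpredN ?rpredB //= ?(rpred_nat _ 2).
Qed.

Lemma conj_neg_sq (z : algC) : z ^+ 2 \is Num.real -> z ^+ 2 < 0 -> z^* = - z.
Proof.
move=> zr zn.
have h1 : (z^*) ^+ 2 = z ^+ 2 by rewrite -rmorphXn; apply/CrealP.
have : (z^* - z) * (z^* + z) = 0.
  by rewrite mulrDr !mulrBl -!expr2 h1 [z * z^*]mulrC; ring.
move/eqP; rewrite mulf_eq0 => /orP[|/eqP]; last by move/eqP; rewrite addr_eq0 => /eqP.
rewrite subr_eq0 => /eqP zc.
have : 0 <= z ^+ 2.
  have zr' : z \is Num.real by apply/CrealP.
  by rewrite real_exprn_even_ge0.
by move/(lt_le_trans zn); rewrite ltxx.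
Qed.

Lemma s2_lt2 : s2 < 2.
Proof.
have := s2_lt; have := s2_ge0 => h0 h1.
have h : s2 * 3%:R < 2 * 3%:R by apply: (lt_le_trans h1); rewrite -natrM ler_nat.
by rewrite ltr_pM2r ?ltr0n in h.
Qed.

Lemma th_sq k : th k ^+ 2 = - (k%:R) * (2 + s2).
Proof. by rewrite /th sqrtCK. Qed.
Lemma ph_sq k : ph k ^+ 2 = - (k%:R) * (2 - s2).
Proof. by rewrite /ph sqrtCK. Qed.

Lemma th_conj k : (0 < k)%N -> (th k)^* = - th k.
Proof.
move=> kp; apply: conj_neg_sq; rewrite th_sq.
  by rewrite realM ?realN ?realD ?s2_real ?realn.
rewrite mulNr oppr_lt0 mulr_gt0 ?ltr0n //.
by apply: (lt_le_trans (ltr0n _ 2)); rewrite lerDl s2_ge0.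
Qed.
Lemma ph_conj k : (0 < k)%N -> (ph k)^* = - ph k.
Proof.
move=> kp; apply: conj_neg_sq; rewrite ph_sq.
  by rewrite realM ?realN ?realB ?s2_real ?realn.
by rewrite mulNr oppr_lt0 mulr_gt0 ?ltr0n // subr_gt0 s2_lt2.
Qed.

Lemma th_neq0 k : (0 < k)%N -> th k != 0.
Proof.
move=> kp; apply/eqP=> h; have := th_sq k; rewrite h expr0n /= => /eqP.
rewrite eq_sym mulNr oppr_eq0 mulf_eq0 pnatr_eq0 => /orP[/eqP k0|]; first lia.
by rewrite gt_eqF // (lt_le_trans (ltr0n _ 2)) // lerDl s2_ge0.
Qed.
Lemma ph_neq0 k : (0 < k)%N -> ph k != 0.
Proof.
move=> kp; apply/eqP=> h; have := ph_sq k; rewrite h expr0n /= => /eqP.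
rewrite eq_sym mulNr oppr_eq0 mulf_eq0 pnatr_eq0 => /orP[/eqP k0|]; first lia.
by rewrite subr_eq0 gt_eqF // s2_lt2.
Qed.

Lemma norm_th k : (0 < k)%N -> `|th k| ^+ 2 = k%:R * (2 + s2).
Proof. by move=> kp; rewrite normCK th_conj // mulrN -expr2 th_sq mulNr opprK. Qed.
Lemma norm_ph k : (0 < k)%N -> `|ph k| ^+ 2 = k%:R * (2 - s2).
Proof. by move=> kp; rewrite normCK ph_conj // mulrN -expr2 ph_sq mulNr opprK. Qed.

Lemma s2_notrat : s2 \notin Crat.
Proof.
apply/negP=> h.
have hi : s2 \in Num.int by apply: Cint_rat_Aint => //; exact: s2_Aint.
have hn : s2 \in Num.nat by rewrite natrEint hi s2_ge0.
move/natrP: hn => [m hm].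
have := s2_sq; rewrite hm -natrX => /eqP; rewrite (eqr_nat _ _ 2) => /eqP.
rewrite expnS expn1 => hm2.
have : (m <= 1)%N \/ (2 <= m)%N by lia.
case=> hh; nia.
Qed.

Lemma irr_s2 c d : c \in Crat -> d \in Crat -> c + d * s2 = 0 -> c = 0 /\ d = 0.
Proof.
move=> cr dr h.
have [d0|dn0] := eqVneq d 0.
  by move: h; rewrite d0 mul0r addr0 => ->.
exfalso; have : s2 = - c / d.
  by apply: (mulIf dn0); rewrite divfK //; apply/eqP; rewrite -addr_eq0 mulrC addrC h.
move=> e; move: s2_notrat; rewrite e rpredM ?rpredN ?rpredV //.
Qed.

Lemma real_s2_comb u v : u \in Crat -> v \in Crat -> (u + v * s2)^* = u + v * s2.
Proof. by move=> ur vr; rewrite rmorphD rmorphM /= s2_conj (conj_Crat ur) (conj_Crat vr). Qed.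

Lemma zero_lemma k a b c d : (0 < k)%N ->
  a \in Crat -> b \in Crat -> c \in Crat -> d \in Crat ->
  a + b * s2 + (c + d * s2) * th k = 0 -> [/\ a = 0, b = 0, c = 0 & d = 0].
Proof.
move=> kp ar br cr dr h.
have hc : a + b * s2 - (c + d * s2) * th k = 0.
  have := congr1 (@Num.conj _) h; rewrite rmorphD rmorphM /= !real_s2_comb // th_conj //.
  by rewrite rmorph0 mulrN.
have hv : (c + d * s2) * th k = 0.
  have : (c + d * s2) * th k *+ 2 = 0.
    transitivity ((a + b*s2 + (c+d*s2)*th k) - (a + b*s2 - (c + d*s2)*th k)); first ring.
    by rewrite h hc subrr.
  by move/eqP; rewrite mulrn_eq0 /= => /eqP.
move/eqP: hv; rewrite mulf_eq0 (negbTE (th_neq0 kp)) orbF => /eqP hv.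
have [c0 d0] := irr_s2 cr dr hv.
move: h; rewrite hv mul0r addr0 => h.
by have [a0 b0] := irr_s2 ar br h.
Qed.

Lemma rep_lemma (k : nat) (p : {poly rat}) : exists a b c d : rat,
  forall s r : algC, s ^+ 2 = 2 -> r ^+ 2 = - (k%:R) * (2 + s) ->
  (map_poly ratr p).[r] = ratr a + ratr b * s + (ratr c + ratr d * s) * r.
Proof.
elim/poly_ind: p => [|p c0 [a [b [c [d IH]]]]].
  by exists 0, 0, 0, 0 => s r _ _; rewrite rmorph0 horner0 !rmorph0; ring.
exists (c0 - 2 * k%:R * c - 2 * k%:R * d), (- k%:R * c - 2 * k%:R * d), a, b.
move=> s r hs hr.
rewrite rmorphD rmorphM /= map_polyX map_polyC /= hornerD hornerMX hornerC (IH s r hs hr).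
rewrite !(rmorphD, rmorphB, rmorphN, rmorphM, rmorph_nat) /=.
have e : r * r = - (k%:R) * (2 + s) by rewrite -expr2.
have e2 : s * s = 2 by rewrite -expr2.
transitivity (ratr a * r + ratr b * s * r + ratr c * (r * r) + ratr d * s * (r * r) + ratr c0).
  ring.
rewrite e.
transitivity (ratr a * r + ratr b * s * r - k%:R * ratr c * (2 + s) - k%:R * ratr d * (2 * s + s * s) + ratr c0).
  ring.
rewrite e2; ring.
Qed.

Definition rt (k : nat) (j : 'I_4) : algC := nth 0 [:: th k; - th k; ph k; - ph k] j.
Definition st (j : 'I_4) : algC := nth 0 [:: s2; s2; - s2; - s2] j.

Definition Fk (k : nat) : {poly algC} :=
  'X^4 + (4 * k%:R) *: 'X^2 + (2 * k%:R ^+ 2)%:P.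
Definition fq (k : nat) : {poly rat} :=
  'X^4 + (4 * k%:R) *: 'X^2 + (2 * k%:R ^+ 2)%:P.
Definition fz (k : nat) : {poly int} :=
  'X^4 + (4 * k%:R) *: 'X^2 + (2 * k%:R ^+ 2)%:P.

Lemma Fk_q k : map_poly ratr (fq k) = Fk k.
Proof.
rewrite /fq /Fk !rmorphD /= map_polyZ !map_polyXn map_polyC.
congr (_ + _ *: _ + _%:P); first by rewrite -natrM rmorph_nat natrM.
rewrite -natrX -natrM; apply: eq_trans (ratr_nat _ (2 * k ^ 2)) _; by rewrite natrM natrX.
Qed.
Lemma Fk_z k : map_poly intr (fz k) = Fk k.
Proof.
rewrite /fz /Fk !rmorphD /= map_polyZ !map_polyXn map_polyC.
congr (_ + _ *: _ + _%:P); first by rewrite -natrM rmorph_nat natrM.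
rewrite -natrX -natrM; apply: eq_trans (mulrz_nat _ _) _; by rewrite natrM natrX.
Qed.

Lemma prod_rt k : \prod_(j < 4) ('X - (rt k j)%:P) = Fk k.
Proof.
rewrite !big_ord_recl big_ord0 /rt /=.
set T := (th k)%:P; set P := (ph k)%:P.
have eT : T * T = (- (k%:R) * (2 + s2))%:P by rewrite -polyCM -expr2 th_sq.
have eP : P * P = (- (k%:R) * (2 - s2))%:P by rewrite -polyCM -expr2 ph_sq.
rewrite !polyCN.
transitivity ('X^4 - (T * T + P * P) * 'X^2 + (T * T) * (P * P)); first ring.
rewrite eT eP -polyCD -!polyCM /Fk -mul_polyC.
congr (_ + _ + _).
  by rewrite -mulNr -polyCN; congr (_%:P * _); ring.
congr (_%:P); transitivity (k%:R ^+ 2 * (4 - s2 ^+ 2) : algC); first ring.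
by rewrite s2_sq; ring.
Qed.

Lemma root_rt k j : root (Fk k) (rt k j).
Proof.
rewrite -prod_rt /root horner_prod; apply/prodf_eq0; exists j => //.
by rewrite !hornerE subrr.
Qed.

Lemma size_Fk k : size (Fk k) = 5%N.
Proof. by rewrite -prod_rt size_prod_XsubC /index_enum /= -enumT size_enum_ord. Qed.

Lemma monic_Fk k : Fk k \is monic.
Proof. by rewrite -prod_rt monic_prod_XsubC. Qed.

Lemma min_th k : (0 < k)%N -> minCpoly (th k) = Fk k.
Proof.
move=> kp.
have [p [Dp monp] dv] := minCpolyP (th k).
have hd : minCpoly (th k) %| Fk k.
  rewrite Dp -Fk_q dvdp_map -dv Fk_q.
  by have := root_rt k ord0.
have hs1 : (size (minCpoly (th k)) <= 5)%N.
  by rewrite -(size_Fk k) dvdp_leq // monic_neq0 // monic_Fk.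
have hs2 : ~ (size (minCpoly (th k)) <= 4)%N.
  move=> hs.
  set mp := minCpoly (th k) in hs hd hs1 *.
  have hr : mp.[th k] = 0 by apply/eqP; exact: root_minCpoly.
  rewrite (horner_coef_wide _ hs) !big_ord_recl big_ord0 /= in hr.
  have cr i : mp`_i \in Crat by rewrite /mp Dp coef_map Crat_rat.
  have e3 : th k ^+ 3 = th k ^+ 2 * th k by rewrite exprSr.
  rewrite ?addn0 ?add1n expr0 expr1 e3 th_sq in hr.
  have hr2 : (mp`_0 - 2 * k%:R * mp`_2) + (- k%:R * mp`_2) * s2
     + ((mp`_1 - 2 * k%:R * mp`_3) + (- k%:R * mp`_3) * s2) * th k = 0.
    by rewrite -[X in _ = X]hr; ring.
  have Q i j : mp`_i - 2 * k%:R * mp`_j \in Crat by rewrite rpredB ?rpredM ?rpred_nat ?cr.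
  have Q' i : - k%:R * mp`_i \in Crat by rewrite rpredM ?rpredN ?rpred_nat ?cr.
  have [e0 e1 e2 e3'] := zero_lemma kp (Q _ _) (Q' _) (Q _ _) (Q' _) hr2.
  have kn0 : (k%:R : algC) != 0 by rewrite pnatr_eq0 -lt0n.
  have c2 : mp`_2 = 0.
    by move/eqP: e1; rewrite mulNr oppr_eq0 mulf_eq0 (negbTE kn0) => /eqP.
  have c3 : mp`_3 = 0.
    by move/eqP: e3'; rewrite mulNr oppr_eq0 mulf_eq0 (negbTE kn0) => /eqP.
  have c0 : mp`_0 = 0 by move: e0; rewrite c2 mulr0 subr0.
  have c1 : mp`_1 = 0 by move: e2; rewrite c3 mulr0 subr0.
  have := minCpoly_monic (th k); rewrite -/mp monicE lead_coefE.
  have := size_minCpoly (th k); rewrite -/mp.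
  move: hs; case: (size mp) => [|[|[|[|[|n]]]]] //= _ _.
  - by rewrite c1 eq_sym oner_eq0.
  - by rewrite c2 eq_sym oner_eq0.
  - by rewrite c3 eq_sym oner_eq0.
have hs : size (minCpoly (th k)) = size (Fk k) by rewrite size_Fk; lia.
apply/eqP; rewrite -eqp_monic ?minCpoly_monic ?monic_Fk //.
by rewrite -dvdp_size_eqp // hs.
Qed.

Lemma st_sq j : st j ^+ 2 = 2.
Proof. by case: j => [[|[|[|[|]]]] //= ?]; rewrite /st /= ?sqrrN s2_sq. Qed.

Lemma rt_sq k j : rt k j ^+ 2 = - (k%:R) * (2 + st j).
Proof. by case: j => [[|[|[|[|]]]] //= ?]; rewrite /st /rt /= ?sqrrN ?th_sq ?ph_sq. Qed.

Lemma conj_root k (h : {poly rat}) j : (0 < k)%N ->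
  root (map_poly ratr h) (th k) -> root (map_poly ratr h) (rt k j).
Proof.
move=> kp hr; have [p [Dp _] dv] := minCpolyP (th k).
rewrite dv -(dvdp_map (@ratr algC)) in hr.
by apply: root_dvdp hr _; rewrite -Dp min_th // root_rt.
Qed.

Lemma conj_minroot k (p : {poly rat}) j : (0 < k)%N ->
  root (minCpoly (map_poly ratr p).[th k]) (map_poly ratr p).[rt k j].
Proof.
move=> kp; set x := (map_poly ratr p).[th k].
have [q [Dq _] _] := minCpolyP x.
rewrite Dq /root -horner_comp -map_comp_poly.
apply: conj_root => //.
by rewrite /root map_comp_poly horner_comp -Dq; exact: root_minCpoly.
Qed.

Lemma conj_Aint k (p : {poly rat}) j : (0 < k)%N ->
  (map_poly ratr p).[th k] \in Aint -> (map_poly ratr p).[rt k j] \in Aint.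
Proof.
move=> kp hA.
have := @root_monic_Aint _ _ (conj_minroot p j kp) (minCpoly_monic _).
by apply; exact: hA.
Qed.

Lemma conj_gen k (p g : {poly rat}) i j : (0 < k)%N ->
  (map_poly ratr g).[(map_poly ratr p).[th k]] = th k ->
  (map_poly ratr p).[rt k i] = (map_poly ratr p).[rt k j] -> rt k i = rt k j.
Proof.
move=> kp hg e.
have key l : (map_poly ratr g).[(map_poly ratr p).[rt k l]] = rt k l.
  have : root (map_poly ratr (g \Po p - 'X)) (rt k l).
    apply: conj_root => //.
    by rewrite /root rmorphB /= map_polyX map_comp_poly hornerD hornerN horner_comp hornerX hg subrr.
  by rewrite /root rmorphB /= map_polyX map_comp_poly hornerD hornerN horner_comp hornerX subr_eq0 => /eqP.
by rewrite -(key i) -(key j) e.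
Qed.

Lemma rt_inj k : (0 < k)%N -> injective (rt k).
Proof.
move=> kp.
have h1 : th k != - th k.
  by apply/eqP => /eqP; rewrite -addr_eq0 -mulr2n mulrn_eq0 /= (negbTE (th_neq0 kp)).
have h2 : ph k != - ph k.
  by apply/eqP => /eqP; rewrite -addr_eq0 -mulr2n mulrn_eq0 /= (negbTE (ph_neq0 kp)).
have h3 : th k ^+ 2 != ph k ^+ 2.
  rewrite th_sq ph_sq; apply/eqP => e.
  have : - (k%:R : algC) * (s2 *+ 2) = 0.
    by transitivity (- (k%:R) * (2 + s2) - - (k%:R) * (2 - s2) : algC); [ring | rewrite e subrr].
  move/eqP; rewrite mulf_eq0 oppr_eq0 pnatr_eq0 mulrn_eq0 /= (negbTE s2_neq0) orbF => /eqP.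
  lia.
have h4 : th k != ph k by apply: contra h3 => /eqP ->.
have h5 : th k != - ph k by apply: contra h3 => /eqP ->; rewrite sqrrN.
have h1' : - th k != th k by rewrite eq_sym.
have h2' : - ph k != ph k by rewrite eq_sym.
have h4' : ph k != th k by rewrite eq_sym.
have h5' : - ph k != th k by rewrite eq_sym.
have h6 : - th k != ph k by rewrite -eqr_opp opprK eq_sym.
have h6' : ph k != - th k by rewrite eq_sym.
have h7 : - th k != - ph k by rewrite eqr_opp.
have h7' : - ph k != - th k by rewrite eq_sym.
move=> i j; case: i => [[|[|[|[|n]]]] Hi] //; case: j => [[|[|[|[|m]]]] Hj] //;
  rewrite /rt /= => e; try (by apply/val_inj); exfalso; move: e; apply/eqP;
  solve [exact h1 | exact h1' | exact h2 | exact h2' | exact h4 | exact h4'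
        | exact h5 | exact h5' | exact h6 | exact h6' | exact h7 | exact h7'].
Qed.

Local Close Scope ring_scope.

Lemma sqf_sq k n : squarefree k -> (k %| n * n)%N -> (k %| n)%N.
Proof.
elim/ltn_ind: k n => k IH n sq hd.
case: (ltnP 1 k) => hk; last first.
  case: k hk IH sq hd => [|[|]] // _ _ sq _.
  by have := sq 2 isT; rewrite dvdn0.
have pp := pdiv_prime hk; have pk := pdiv_dvd k.
set p := pdiv k in pp pk.
set k' := k %/ p.
have ek : k = k' * p by rewrite divnK.
have pn : (p %| n)%N.
  have : (p %| n * n)%N by apply: dvdn_trans hd.
  by rewrite Euclid_dvdM // orbb.
have en : n = (n %/ p) * p by rewrite divnK.
set n' := n %/ p in en.
have p0 : (0 < p)%N by apply: prime_gt0.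
have cop : coprime k' p.
  rewrite coprime_sym prime_coprime //; apply/negP => h.
  have := sq p pp; rewrite ek; move/negP; apply.
  by rewrite dvdn_pmul2r.
have sq' : squarefree k'.
  move=> q qp; apply/negP => h; have := sq q qp; move/negP; apply.
  by rewrite ek dvdn_mulr.
have lt : (k' < k)%N by rewrite /k' ltn_Pdiv ?prime_gt1 //; lia.
have hd' : (k' %| n' * n')%N.
  move: hd; rewrite ek en.
  have -> : (n' * p * (n' * p) = (n' * (n' * p)) * p)%N by nia.
  rewrite dvdn_pmul2r // mulnA Gauss_dvdl //.
rewrite ek en dvdn_pmul2r //; exact: IH.
Qed.


Local Open Scope ring_scope.

Lemma sqf_dvdz k (m : int) : squarefree k -> (k%:Z %| m * m)%Z -> (k%:Z %| m)%Z.
Proof.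
move=> sq; rewrite !dvdzE abszM /=; exact: sqf_sq.
Qed.

Lemma odd_dvdz k (m : int) : odd k -> (k%:Z %| 2 * m)%Z -> (k%:Z %| m)%Z.
Proof.
move=> ok; rewrite !dvdzE abszM /=.
by rewrite Gauss_dvdr // coprimen2.
Qed.

Lemma par (x : int) : exists q, x = 2 * q \/ x = 2 * q + 1.
Proof. exists (x %/ 2)%Z; lia. Qed.

Lemma NT (k : nat) (A B g d N0 N1 : int) : odd k -> squarefree k ->
  16 * k%:Z * N0 = 4 * k%:Z * (A * A) + 8 * k%:Z * (B * B) + 2 * (g * g) + 4 * (d * d) + 4 * (g * d) ->
  16 * k%:Z * N1 = 8 * k%:Z * (A * B) + g * g + 2 * (d * d) + 4 * (g * d) ->
  exists A1 B1 c1 d1 : int, [/\ A = 2 * A1, B = 2 * B1, g = 4 * k%:Z * c1 & d = 4 * k%:Z * d1].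
Proof.
move=> ok sq E0 E1.
set K := k%:Z in E0 E1 *.
have [q1 hq1] : exists q, g * g + 2 * (d * d) + 4 * (g * d) = q * K.
  by exists (16 * N1 - 8 * (A * B)); lia.
have [q0 hq0] : exists q, 2 * (g * g) + 4 * (d * d) + 4 * (g * d) = q * K.
  by exists (16 * N0 - 4 * (A * A) - 8 * (B * B)); lia.
have h4 : (K %| 2 * (2 * (g * d)))%Z.
  by apply/dvdzP; exists (2 * q1 - q0); lia.
have /dvdzP [w hw] : (K %| g * d)%Z by apply: (odd_dvdz ok); apply: (odd_dvdz ok).
have hq3 : g * g + 2 * (d * d) = (q1 - 4 * w) * K by lia.
have hg : (K %| g)%Z.
  apply: (sqf_dvdz sq); apply: (sqf_dvdz sq); apply/dvdzP.
  exists (g * g * (q1 - 4 * w) - 2 * (g * d) * w).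
  transitivity (g * g * (g * g + 2 * (d * d)) - 2 * (g * d) * (g * d)); first ring.
  rewrite hq3 hw; ring.
have hd : (K %| d)%Z.
  apply: (sqf_dvdz sq); apply: (sqf_dvdz sq); apply: (odd_dvdz ok); apply/dvdzP.
  exists (d * d * (q1 - 4 * w) - (g * d) * w).
  transitivity (d * d * (g * g + 2 * (d * d)) - (g * d) * (g * d)); first ring.
  rewrite hq3 hw; ring.
move/dvdzP: hg => [g' eg]; move/dvdzP: hd => [d' ed].
have Kn0 : K != 0 by rewrite /K; apply/negP => /eqP h; move: ok; have -> : k = 0%N by lia.
have E0' : 16 * N0 = 4 * (A * A) + 8 * (B * B) + K * (2 * (g' * g') + 4 * (d' * d') + 4 * (g' * d')).
  apply: (mulIf Kn0).
  transitivity (16 * K * N0); first ring.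
  rewrite E0 eg ed; ring.
have E1' : 16 * N1 = 8 * (A * B) + K * (g' * g' + 2 * (d' * d') + 4 * (g' * d')).
  apply: (mulIf Kn0).
  transitivity (16 * K * N1); first ring.
  rewrite E1 eg ed; ring.
have [K' eK] : exists K', K = 2 * K' + 1.
  exists (k./2)%:Z; rewrite /K; have := odd_double_half k; rewrite ok /=; lia.
rewrite eK in E0' E1'.
have [g1 [eg1|eg1]] := par g'; rewrite eg1 in E0' E1'; last lia.
have [d1 [ed1|ed1]] := par d'; rewrite ed1 in E0' E1'; last lia.
have [g2 [eg2|eg2]] := par g1; rewrite eg2 in E0' E1'; last lia.
have [A1 [eA|eA]] := par A; rewrite eA in E0' E1'; last lia.
have [B1 [eB|eB]] := par B; rewrite eB in E0' E1'; last lia.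
have [d2 [ed2|ed2]] := par d1; rewrite ed2 in E0' E1'; last lia.
exists A1, B1, g2, d2; split => //.
  by rewrite eg eg1 eg2; ring.
by rewrite ed ed1 ed2; ring.
Qed.

Lemma int_of (z : algC) : z \in Crat -> z \in Aint -> exists m : int, z = m%:~R.
Proof. by move=> zr za; apply/intrP; apply: Cint_rat_Aint. Qed.

Lemma lemF e f : e \in Crat -> f \in Crat -> e + f * s2 \in Aint -> e - f * s2 \in Aint ->
  (exists m : int, e = m%:~R) /\ (exists m : int, f = m%:~R).
Proof.
move=> er fr h1 h2.
have [E hE] : exists E : int, 2 * e = E%:~R.
  apply: int_of; first by rewrite rpredM ?rpred_nat.
  by rewrite (_ : 2 * e = e + f * s2 + (e - f * s2)); [rewrite rpredD | ring].
have [G hG] : exists G : int, 4 * f = G%:~R.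
  apply: int_of; first by rewrite rpredM ?rpred_nat.
  have e2 := s2_sq.
  rewrite (_ : 4 * f = s2 * ((e + f * s2) - (e - f * s2))); last by ring: e2.
  by apply: rpredM; [exact: s2_Aint | exact: rpredB].
have [N hN] : exists N : int, e * e - 2 * (f * f) = N%:~R.
  apply: int_of; first by rewrite rpredB ?rpredM ?rpred_nat.
  have e2 := s2_sq.
  rewrite (_ : e * e - 2 * (f * f) = (e + f * s2) * (e - f * s2)); last by ring: e2.
  by rewrite rpredM.
have Z : 2 * (E * E) - G * G = 8 * N.
  by apply: (@intr_inj algC); rewrite !rmorphB !rmorphM /= -hE -hG -hN; ring.
have [G1 [eG|eG]] := par G; rewrite eG in Z; last lia.
have [E1 [eE|eE]] := par E; rewrite eE in Z; last lia.
have [G2 [eG2|eG2]] := par G1; rewrite eG2 in Z; last lia.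
split; [exists E1 | exists G2].
  apply: (mulfI (x := 2)); first by rewrite pnatr_eq0.
  by rewrite hE eE rmorphM.
apply: (mulfI (x := 4)); first by rewrite pnatr_eq0.
by rewrite hG eG eG2 !rmorphM /=; ring.
Qed.

Lemma Fk_polyOver k : Fk k \is a polyOver Num.int.
Proof. by rewrite -Fk_z; apply/polyOverP => i; rewrite coef_map /= rpred_int. Qed.

Lemma rt_Aint k j : rt k j \in Aint.
Proof. exact: root_monic_Aint (root_rt k j) (monic_Fk k) (Fk_polyOver k). Qed.

Lemma intz_nat k : ((k%:Z)%:~R : algC) = k%:R.
Proof. by rewrite -pmulrn. Qed.

Lemma OK_coeffs k (p : {poly rat}) : (1 < k)%N -> odd k -> squarefree k ->
  (map_poly ratr p).[th k] \in Aint ->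
  exists a b c d : int, forall j, (map_poly ratr p).[rt k j] =
     a%:~R + b%:~R * st j + (c%:~R + d%:~R * st j) * rt k j.
Proof.
move=> k1 ok sq hA.
have kp : (0 < k)%N by lia.
have [a [b [c [d H]]]] := rep_lemma k p.
have Hj j := H (st j) (rt k j) (st_sq j) (rt_sq k j).
have xA j : (map_poly ratr p).[rt k j] \in Aint := @conj_Aint k p j kp hA.
have x0 := Hj 0; have x1 := Hj 1; have x2 := Hj 2; have x3 := Hj 3.
have A0 := xA 0; have A1 := xA 1; have A2 := xA 2; have A3 := xA 3.
rewrite /st /rt /= in x0 x1 x2 x3 A0 A1 A2 A3.
move: A0 A1 A2 A3; rewrite x0 x1 x2 x3 => {x0 x1 x2 x3} A0 A1 A2 A3.
set al := ratr a in A0 A1 A2 A3 H *; set be := ratr b in A0 A1 A2 A3 H *.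
set ga := ratr c in A0 A1 A2 A3 H *; set de := ratr d in A0 A1 A2 A3 H *.
have alr : al \in Crat by apply: Crat_rat.
have ber : be \in Crat by apply: Crat_rat.
have gar : ga \in Crat by apply: Crat_rat.
have der : de \in Crat by apply: Crat_rat.
clearbody al be ga de.
have es := s2_sq; have et := th_sq k; have ep := ph_sq k.
have Kr : (k%:R : algC) \in Crat by apply: rpred_nat.
have [[A hA'] [B hB]] : (exists m : int, 2 * al = m%:~R) /\ (exists m : int, 2 * be = m%:~R).
  apply: lemF; rewrite ?rpredM ?rpred_nat //.
    rewrite (_ : _ + _ = al + be * s2 + (ga + de * s2) * th k + (al + be * s2 + (ga + de * s2) * - th k)).
      by rewrite rpredD.
    ring.
  rewrite (_ : _ - _ = al + be * - s2 + (ga + de * - s2) * ph k + (al + be * - s2 + (ga + de * - s2) * - ph k)).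
    by rewrite rpredD.
  ring.
set n0 := al * al + 2 * (be * be) + k%:R * (2 * (ga * ga) + 4 * (de * de) + 4 * (ga * de)).
set n1 := 2 * al * be + k%:R * (ga * ga + 2 * (de * de) + 4 * (ga * de)).
have [[N0 hN0] [N1 hN1]] : (exists m : int, n0 = m%:~R) /\ (exists m : int, n1 = m%:~R).
  apply: lemF; [by rewrite /n0 ?(rpredD, rpredM, rpred_nat) | by rewrite /n1 ?(rpredD, rpredM, rpred_nat) | |].
    rewrite (_ : _ + _ = (al + be * s2 + (ga + de * s2) * th k) * (al + be * s2 + (ga + de * s2) * - th k)).
      by rewrite rpredM.
    rewrite /n0 /n1; ring: es et.
  rewrite (_ : _ - _ = (al + be * - s2 + (ga + de * - s2) * ph k) * (al + be * - s2 + (ga + de * - s2) * - ph k)).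
    by rewrite rpredM.
  rewrite /n0 /n1; ring: es ep.
have thA := rt_Aint k 0; have phA := rt_Aint k 2.
rewrite /rt /= in thA phA.
have [[P hP] [Q hQ]] : (exists m : int, - 4 * k%:R * (ga + de) = m%:~R) /\
                        (exists m : int, - 2 * k%:R * (ga + 2 * de) = m%:~R).
  apply: lemF; [by rewrite ?(rpredD, rpredM, rpred_nat, rpredN) | by rewrite ?(rpredD, rpredM, rpred_nat, rpredN) | |].
    rewrite (_ : _ + _ = th k * ((al + be * s2 + (ga + de * s2) * th k) - (al + be * s2 + (ga + de * s2) * - th k))).
      by rewrite rpredM // rpredB.
    rewrite /n0 /n1; ring: es et.
  rewrite (_ : _ - _ = ph k * ((al + be * - s2 + (ga + de * - s2) * ph k) - (al + be * - s2 + (ga + de * - s2) * - ph k))).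
    by rewrite rpredM // rpredB.
  rewrite /n0 /n1; ring: es ep.
pose gI := 2 * Q - 2 * P; pose dI := P - 2 * Q.
have hg : 4 * k%:R * ga = gI%:~R.
  by rewrite /gI /dI rmorphB !rmorphM /= -hP -hQ; ring.
have hd : 4 * k%:R * de = dI%:~R.
  by rewrite /gI /dI rmorphB !rmorphM /= -hP -hQ; ring.
clearbody gI dI.
have E0 : 16 * k%:Z * N0 = 4 * k%:Z * (A * A) + 8 * k%:Z * (B * B) + 2 * (gI * gI)
     + 4 * (dI * dI) + 4 * (gI * dI).
  apply: (@intr_inj algC); rewrite !(rmorphD, rmorphM) /= !intz_nat -hN0 -hA' -hB -hg -hd /n0; ring.
have E1 : 16 * k%:Z * N1 = 8 * k%:Z * (A * B) + gI * gI
     + 2 * (dI * dI) + 4 * (gI * dI).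
  apply: (@intr_inj algC); rewrite !(rmorphD, rmorphM) /= intz_nat -hN1 -hA' -hB -hg -hd /n1; ring.
have [a1 [b1 [c1 [d1 [eA eB eg ed]]]]] := NT ok sq E0 E1.
have kn0 : (k%:R : algC) != 0 by rewrite pnatr_eq0 -lt0n.
exists a1, b1, c1, d1 => j.
rewrite (H (st j) (rt k j) (st_sq j) (rt_sq k j)).
have -> : al = a1%:~R.
  apply: (mulfI (x := 2)); first by rewrite pnatr_eq0.
  by rewrite hA' eA rmorphM.
have -> : be = b1%:~R.
  apply: (mulfI (x := 2)); first by rewrite pnatr_eq0.
  by rewrite hB eB rmorphM.
have k4 : 4 * k%:R != 0 :> algC by rewrite mulf_eq0 (negbTE kn0) orbF pnatr_eq0.
have -> : ga = c1%:~R.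
  apply: (mulfI k4).
  by rewrite hg eg !rmorphM /= !intz_nat.
have -> : de = d1%:~R.
  apply: (mulfI k4).
  by rewrite hd ed !rmorphM /= !intz_nat.
by [].
Qed.

Lemma det4 (R : comNzRingType) (f : nat -> nat -> R) : \det (\matrix_(i < 4, j < 4) f i j) =
  f 0 0 * (f 1 1 * (f 2 2 * f 3 3 - f 2 3 * f 3 2) - f 1 2 * (f 2 1 * f 3 3 - f 2 3 * f 3 1) + f 1 3 * (f 2 1 * f 3 2 - f 2 2 * f 3 1))
- f 0 1 * (f 1 0 * (f 2 2 * f 3 3 - f 2 3 * f 3 2) - f 1 2 * (f 2 0 * f 3 3 - f 2 3 * f 3 0) + f 1 3 * (f 2 0 * f 3 2 - f 2 2 * f 3 0))
+ f 0 2 * (f 1 0 * (f 2 1 * f 3 3 - f 2 3 * f 3 1) - f 1 1 * (f 2 0 * f 3 3 - f 2 3 * f 3 0) + f 1 3 * (f 2 0 * f 3 1 - f 2 1 * f 3 0))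
- f 0 3 * (f 1 0 * (f 2 1 * f 3 2 - f 2 2 * f 3 1) - f 1 1 * (f 2 0 * f 3 2 - f 2 2 * f 3 0) + f 1 2 * (f 2 0 * f 3 1 - f 2 1 * f 3 0)).
Proof.
rewrite (expand_det_row _ ord0) !big_ord_recl big_ord0 /cofactor.
rewrite !(expand_det_row _ ord0) !big_ord_recl !big_ord0 /cofactor.
rewrite !(expand_det_row _ ord0) !big_ord_recl !big_ord0 /cofactor.
rewrite !det_mx11 !mxE /=.
ring.
Qed.

Definition s2p (k : nat) : {poly rat} := - ((k%:R)^-1 : rat) *: 'X^2 - 2%:P.
Definition PbK (k : nat) (i : 'I_4) : {poly rat} := nth (0 : {poly rat}) [:: (1 : {poly rat}); s2p k; 'X; s2p k * 'X] i.

Lemma ev_s2p k (s r : algC) : (0 < k)%N -> r ^+ 2 = - (k%:R) * (2 + s) ->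
  (map_poly ratr (s2p k)).[r] = s.
Proof.
move=> kp hr.
rewrite /s2p rmorphB /= map_polyZ map_polyXn map_polyC /= hornerD hornerN hornerZ hornerXn hornerC hr.
rewrite rmorphN fmorphV rmorph_nat /= rmorph_nat.
have kn0 : (k%:R : algC) != 0 by rewrite pnatr_eq0 -lt0n.
rewrite mulNr mulrN mulNr opprK mulrA mulVf // mul1r; ring.
Qed.

Lemma evPb k i j : (0 < k)%N ->
  (map_poly ratr (PbK k i)).[rt k j] = nth 0 [:: 1; st j; rt k j; st j * rt k j] i.
Proof.
move=> kp; have e := ev_s2p kp (rt_sq k j).
case: i => [[|[|[|[|]]]] //= ?]; rewrite /PbK /=.
all: rewrite ?rmorph1 ?hornerC ?rmorphM /= ?map_polyX ?hornerX ?hornerMX ?e //.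
Qed.

Lemma evPb0 k i : (0 < k)%N ->
  (map_poly ratr (PbK k i)).[th k] = nth 0 [:: 1; s2; th k; s2 * th k] i.
Proof. move=> kp; exact: (evPb i (ord0 : 'I_4) kp). Qed.

Definition fM (k : nat) (i j : nat) : algC :=
  nth 0 [:: 1; nth 0 [:: s2; s2; - s2; - s2] j; nth 0 [:: th k; - th k; ph k; - ph k] j;
            nth 0 [:: s2; s2; - s2; - s2] j * nth 0 [:: th k; - th k; ph k; - ph k] j] i.

Lemma det_val k : (0 < k)%N ->
  (\det (\matrix_(i < 4, j < 4) (map_poly ratr (PbK k i)).[rt k j])) ^+ 2 = 2048 * k%:R ^+ 2.
Proof.
move=> kp.
have -> : \matrix_(i < 4, j < 4) (map_poly ratr (PbK k i)).[rt k j] = \matrix_(i < 4, j < 4) fM k i j.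
  by apply/matrixP => i j; rewrite !mxE evPb.
rewrite det4 /fM /=.
have es := s2_sq; have et := th_sq k; have ep := ph_sq k.
ring: es et ep.
Qed.

Lemma abs_disc_th k : (1 < k)%N -> odd k -> squarefree k ->
  abs_disc (th k) (2048 * k%:R ^+ 2).
Proof.
move=> k1 ok sq; have kp : (0 < k)%N by lia.
have G1 : minCpoly (th k) = \prod_(j < 4) ('X - (rt k j)%:P) by rewrite min_th // prod_rt.
have G2 : forall i, (map_poly ratr (PbK k i)).[th k] \in Aint.
  move=> i; rewrite evPb0 //.
  have thA : th k \in Aint by exact: (rt_Aint k 0).
  by case: i => [[|[|[|[|]]]] //= ?]; rewrite ?rpredM ?s2_Aint ?rpred1.
have G3 : forall x, in_OK (th k) x -> exists c : 'I_4 -> int,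
    x = \sum_(i < 4) (c i)%:~R * (map_poly ratr (PbK k i)).[th k].
  move=> x [[p ->] xA].
  have [a [b [c [d H]]]] := OK_coeffs k1 ok sq xA.
  exists (fun i : 'I_4 => nth 0 [:: a; b; c; d] i).
  rewrite (H ord0) !big_ord_recl big_ord0 !evPb0 //= /st /rt /=; ring.
have G4 : forall c : 'I_4 -> int,
    \sum_(i < 4) (c i)%:~R * (map_poly ratr (PbK k i)).[th k] = 0 -> forall i, c i = 0.
  move=> c; rewrite !big_ord_recl big_ord0 !evPb0 //= => h.
  have h' : (c ord0)%:~R + (c (lift ord0 ord0))%:~R * s2
      + ((c (lift ord0 (lift ord0 ord0)))%:~R + (c (lift ord0 (lift ord0 (lift ord0 ord0))))%:~R * s2) * th k = 0.
    by rewrite -h; ring.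
  have [||||e0 e1 e2 e3] := zero_lemma kp _ _ _ _ h'; try exact: rpred_int.
  move=> i; apply/eqP; rewrite -(intr_eq0 algC).
  case: i => [[|[|[|[|]]]] //= Hi].
  + by rewrite (_ : Ordinal Hi = ord0) ?e0 //; apply/val_inj.
  + by rewrite (_ : Ordinal Hi = lift ord0 ord0) ?e1 //; apply/val_inj.
  + by rewrite (_ : Ordinal Hi = lift ord0 (lift ord0 ord0)) ?e2 //; apply/val_inj.
  + by rewrite (_ : Ordinal Hi = lift ord0 (lift ord0 (lift ord0 ord0))) ?e3 //; apply/val_inj.
have G5 : 2048 * k%:R ^+ 2 = `| (\det (\matrix_(i < 4, j < 4) (map_poly ratr (PbK k i)).[rt k j])) ^+ 2 |.
  by rewrite det_val // ger0_norm // mulr_ge0 ?ler0n // exprn_ge0 ?ler0n.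
by exists 4%N, (rt k), (PbK k).
Qed.

Lemma prod_big_ge1 (s : seq algC) : 1 <= \prod_(a <- s | 1 <= `|a|) `|a|.
Proof.
elim: s => [|a s IH]; first by rewrite big_nil.
rewrite big_cons; case: ifP => // ha.
apply: (@le_trans _ _ (1 * 1)); first by rewrite mulr1.
by apply: ler_pM; rewrite ?ler01.
Qed.

Lemma prod_big_ge0 (s : seq algC) : 0 <= \prod_(a <- s | 1 <= `|a|) `|a|.
Proof. exact: le_trans ler01 (prod_big_ge1 s). Qed.

Lemma prod_dom (s l : seq algC) : uniq l -> {subset l <= s} ->
  \prod_(a <- l | 1 <= `|a|) `|a| <= \prod_(a <- s | 1 <= `|a|) `|a|.
Proof.
elim: s l => [|z s IH] l ul sub.
  case: l ul sub => [|y l] _ sub; first by rewrite !big_nil.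
  by have := sub y; rewrite !inE eqxx => /(_ isT).
have [zl|zl] := boolP (z \in l).
  have pl := perm_to_rem zl.
  rewrite (perm_big _ pl) !big_cons.
  have ur : uniq (rem z l) by rewrite rem_uniq.
  have sub' : {subset rem z l <= s}.
    move=> y yr.
    have yl : y \in l by apply: (mem_rem yr).
    have yz : y != z.
      apply/eqP => e; move: yr; rewrite e.
      by rewrite (rem_filter _ ul) mem_filter /= eqxx.
    by have := sub y yl; rewrite inE (negbTE yz).
  case: ifP => _; last exact: IH.
  by apply: ler_pM; rewrite ?normr_ge0 ?prod_big_ge0 //; apply: IH.
rewrite big_cons; case: ifP => hz.
  apply: le_trans (IH l ul _) _.
    by move=> y yl; have := sub y yl; rewrite inE; case: eqP => // e; move: zl; rewrite -e yl.
  by rewrite ler_pMl ?hz // (lt_le_trans ltr01) ?prod_big_ge1.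
by apply: IH => // y yl; have := sub y yl; rewrite inE; case: eqP => // e; move: zl; rewrite -e yl.
Qed.

Lemma prod_all_le (l : seq algC) : \prod_(a <- l) `|a| <= \prod_(a <- l | 1 <= `|a|) `|a|.
Proof.
elim: l => [|a l IH]; first by rewrite !big_nil.
rewrite !big_cons; case: ifP => ha.
  by apply: ler_pM; rewrite ?normr_ge0 ?prodr_ge0.
apply: le_trans (IH).
apply: ler_piMl; first by rewrite prodr_ge0.
have h : `|a| < 1 by rewrite real_ltNge ?normr_real ?real1 // ha.
exact: ltW.
Qed.

Lemma norm_decomp (u w : algC) : u \is Num.real -> w^* = - w -> `|w| <= `|u + w|.
Proof.
move=> ur hw.
have e1 : `|u + w| ^+ 2 = u ^+ 2 + `|w| ^+ 2.
  by rewrite !normCK rmorphD /= (CrealP ur) hw; ring.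
rewrite -(ler_pXn2r (n:=2)) ?nnegrE ?normr_ge0 // e1 lerDr.
exact: real_exprn_even_ge0.
Qed.

Lemma ge1_sq (x : algC) : 0 <= x -> 1 <= x ^+ 2 -> 1 <= x.
Proof.
by move=> x0 h; rewrite -(ler_pXn2r (n:=2)) ?nnegrE ?ler01 // expr1n.
Qed.

Lemma th_ge1 k : (0 < k)%N -> 1 <= `|th k|.
Proof.
move=> kp; apply: ge1_sq; first exact: normr_ge0.
rewrite norm_th //; apply: (@le_trans _ _ (1 * 1)); first by rewrite mulr1.
apply: ler_pM; rewrite ?ler01 ?ler1n //.
by apply: (@le_trans _ _ 2); [rewrite ler1n | rewrite lerDl s2_ge0].
Qed.

Lemma ph_ge1 k : (3 <= k)%N -> 1 <= `|ph k|.
Proof.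
move=> k3; have kp : (0 < k)%N by lia.
apply: ge1_sq; first exact: normr_ge0.
rewrite norm_ph //.
have h2 : 0 <= 2 - s2 by rewrite subr_ge0 ltW // s2_lt2.
apply: (@le_trans _ _ (3%:R * (2 - s2))).
  rewrite (_ : 3%:R * (2 - s2) = 1 + (5%:R - s2 * 3%:R)); last by ring.
  by rewrite lerDl subr_ge0 ltW // s2_lt.
by apply: ler_wpM2r => //; rewrite ler_nat.
Qed.

Lemma fz_monic k : fz k \is monic.
Proof.
rewrite monicE; apply/eqP; apply: (@intr_inj algC).
rewrite -(lead_coef_map_inj (@intr_inj algC) (mulr0z 1)) Fk_z.
by rewrite (monicP (monic_Fk k)).
Qed.

Lemma mahler_th k : (3 <= k)%N -> mahler (th k) (2 * k%:R ^+ 2).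
Proof.
move=> k3; have kp : (0 < k)%N by lia.
exists (fz k); split.
  split; first exact: zcontents_monic (fz_monic k).
  by rewrite Fk_z min_th // eqpxx.
rewrite Fk_z; split; first exact: monic_neq0 (monic_Fk k).
exists [:: th k; - th k; ph k; - ph k].
rewrite (monicP (monic_Fk k)) scale1r normr1 mul1r; split.
  by rewrite -prod_rt !big_cons big_nil !big_ord_recl big_ord0 /rt /=.
rewrite !big_cons big_nil !normrN th_ge1 // ph_ge1 // mulr1.
have e1 := norm_th kp; have e2 := norm_ph kp; have es := s2_sq.
by ring: e1 e2 es.
Qed.

Lemma rt_conj k j : (0 < k)%N -> (rt k j)^* = - rt k j.
Proof.
move=> kp; case: j => [[|[|[|[|]]]] //= ?]; rewrite /rt /= ?rmorphN /= ?th_conj ?ph_conj //.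
Qed.

Lemma st_real j : st j \is Num.real.
Proof. by case: j => [[|[|[|[|]]]] //= ?]; rewrite /st /= ?realN s2_real. Qed.

Lemma mahler_min k x m' : (1 < k)%N -> odd k -> squarefree k ->
  in_OK (th k) x -> generates (th k) x -> mahler x m' -> 2 * k%:R ^+ 2 <= m'.
Proof.
move=> k1 ok sq [[p ex] xA] [_ [g eg]] [P [[_ hP] [Pn0 [s [es em]]]]].
have kp : (0 < k)%N by lia.
subst x.
have [a [b [c [d H]]]] := OK_coeffs k1 ok sq xA.
pose xs := fun j : 'I_4 => (map_poly ratr p).[rt k j].
have xinj : forall i j, xs i = xs j -> i = j.
  move=> i j e; apply: (rt_inj kp); apply: (conj_gen (g := g) kp _ e).
  by rewrite -eg.
set mP := map_poly intr P in hP Pn0 es em.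
set lc := lead_coef mP in es em.
have lcn0 : lc != 0 by rewrite /lc lead_coef_eq0.
have xs_in : forall j, xs j \in s.
  move=> j; rewrite -root_prod_XsubC -(rootZ _ _ lcn0) -es.
  rewrite (eqp_root hP); exact: conj_minroot.
pose l := [:: xs 0; xs 1; xs 2; xs 3].
have ul : uniq l.
  have nq : forall i j : 'I_4, i != j -> xs i != xs j.
    by move=> i j; apply: contra => /eqP /xinj ->.
  rewrite /l /= !inE !negb_or !nq //.
have subl : {subset l <= s} by move=> y; rewrite !inE => /or4P [] /eqP ->; apply: xs_in.
have lc1 : 1 <= `|lc|.
  apply: norm_intr_ge1 => //.
  rewrite /lc /mP lead_coef_map_inj; last exact: mulr0z.
    exact: rpred_int.
  exact: intr_inj.
have hxs : forall j, xs j = (a%:~R + b%:~R * st j) + (c%:~R + d%:~R * st j) * rt k j.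
  by move=> j; rewrite /xs H.
have wle : forall j, `|(c%:~R + d%:~R * st j) * rt k j| <= `|xs j|.
  move=> j; rewrite hxs; apply: norm_decomp.
    by rewrite realD ?realM ?st_real ?Rreal_int.
  rewrite rmorphM /= (_ : (rt k j)^* = - rt k j); last exact: rt_conj.
  rewrite (_ : (c%:~R + d%:~R * st j)^* = c%:~R + d%:~R * st j) ?mulrN //.
  by apply/CrealP; rewrite realD ?realM ?st_real ?Rreal_int.
set v := c%:~R + d%:~R * s2 : algC; set v' := c%:~R - d%:~R * s2 : algC.
have vn0 : v != 0.
  apply/eqP => v0; have : xs 0 = xs 1.
    by rewrite !hxs /st /rt /= -/v v0 !mul0r.
  by move/xinj.
have v'n0 : v' != 0.
  apply/eqP => v0; have : xs 2 = xs 3.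
    rewrite !hxs /st /rt /= (_ : c%:~R + d%:~R * - s2 = v'); last by rewrite /v' mulrN.
    by rewrite v0 !mul0r.
  by move/xinj.
have N1 : 1 <= `|v * v'|.
  apply: norm_intr_ge1; last by rewrite mulf_neq0.
  rewrite (_ : v * v' = (c * c - 2 * (d * d))%:~R); first exact: rpred_int.
  have e2 := s2_sq.
  rewrite /v /v' rmorphB !rmorphM /=; ring: e2.
have prodw : 2 * k%:R ^+ 2 <= `|xs 0| * (`|xs 1| * (`|xs 2| * (`|xs 3| * 1))).
  apply: (@le_trans _ _ (`|(c%:~R + d%:~R * st 0) * rt k 0| * (`|(c%:~R + d%:~R * st 1) * rt k 1|
     * (`|(c%:~R + d%:~R * st 2) * rt k 2| * (`|(c%:~R + d%:~R * st 3) * rt k 3| * 1))))); last first.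
    by repeat (apply: ler_pM; rewrite ?normr_ge0 ?mulr_ge0 ?ler01 ?wle //).
  rewrite /st /rt /= !normrM !normrN -/v (_ : c%:~R + d%:~R * - s2 = v'); last by rewrite /v' mulrN.
  have e1 := norm_th kp; have e2 := norm_ph kp; have es2 := s2_sq.
  have -> : `|v| * `|th k| * (`|v| * `|th k| * (`|v'| * `|ph k| * (`|v'| * `|ph k| * 1)))
      = (`|v * v'| ^+ 2) * (2 * k%:R ^+ 2).
    by rewrite normrM; ring: e1 e2 es2.
  rewrite -[X in X <= _]mul1r; apply: ler_wpM2r.
    by rewrite mulr_ge0 ?ler0n // exprn_ge0 ?ler0n.
  by rewrite -(expr1n _ 2) ler_pXn2r ?nnegrE ?ler01 ?normr_ge0.
rewrite em.
apply: le_trans prodw _.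
apply: (@le_trans _ _ (\prod_(a0 <- s | 1 <= `|a0|) `|a0|)); last first.
  rewrite -[X in X <= _]mul1r; apply: ler_wpM2r => //; exact: prod_big_ge0.
apply: le_trans (prod_dom ul subl).
have := prod_all_le l; by rewrite /l !big_cons big_nil.
Qed.

Theorem corollary6p6 (k : nat) :
  (1 < k)%N -> odd k -> squarefree k ->
  let theta : algC := sqrtC (- (k%:R) * (2 + sqrtC 2)) in
  exists D m : algC,
    abs_disc theta D /\ mahler_OK theta m /\
    D / 2359296%:R <= m /\ m <= D / 4%:R.
Proof.
move=> k1 ok sq theta.
have k3 : (3 <= k)%N by case: k k1 ok sq theta => [|[|[|k]]].
have kp : (0 < k)%N by case: k k1 ok sq theta k3.
exists (2048 * k%:R ^+ 2), (2 * k%:R ^+ 2).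
split; first exact: abs_disc_th.
split.
  split.
    exists (th k); split.
      split; last exact: (rt_Aint k 0).
      by exists 'X; rewrite map_polyX hornerX.
    split; first by split; exists 'X; rewrite map_polyX hornerX.
    exact: mahler_th.
  move=> x m' h1 h2 h3; exact: (mahler_min k1 ok sq h1 h2 h3).
rewrite -!natrX -!natrM.
split.
  rewrite ler_pdivrMr ?ltr0n // -natrM ler_nat.
  rewrite [(2048 * _)%N]mulnC [(2 * _)%N]mulnC -mulnA leq_mul2l.
  by apply/orP; right.
by rewrite ler_pdivlMr ?ltr0n // -natrM ler_nat; nia.
Qed.
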